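(* Let $\Sigma$ be a finite alphabet. A language $L \subseteq \Sigma^*$ belongs to $\mathsf{F}(\mathcal{O}(1))$ if and only if there exists $k \ge 0$ such that $L_n = \{w\in\Sigma^* : \mathrm{last}_n(w)\in L\}$ is $k$-suffix testable for all $n \ge 0$.
   Context: Fix $a\in\Sigma$; $\mathrm{last}_n(a_1\cdots a_m)=a_{m-n+1}\cdots a_m$ if $n\le m$, else $a^{n-m}a_1\cdots a_m$. A fixed-size sliding window algorithm for $L$ is a sequence $(\mathcal{A}_n)_{n\ge0}$ of deterministic (possibly infinite-state) automata with injective encodings of their states into bit strings, $\mathcal{A}_n$ accepting $L_n$; its space complexity at $n$ is the maximal encoding length of a state of $\mathcal{A}_n$. $\mathsf{F}(\mathcal{O}(1))$ is the class of languages having such an algorithm of constant space complexity. $K$ is $k$-suffix testable if for all $x,y\in\Sigma^*$ and $z\in\Sigma^k$: $xz\in K\iff yz\in K$. *)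

(* Defs.v *)
From mathcomp Require Import all_boot.
Set Implicit Arguments. Unset Strict Implicit. Unset Printing Implicit Defensive.

Definition lastn (Sigma : Type) (a : Sigma) (n : nat) (w : seq Sigma) : seq Sigma :=
  if n <= size w then drop (size w - n) w else nseq (n - size w) a ++ w.

Definition Ln (Sigma : Type) (a : Sigma) (L : seq Sigma -> Prop) (n : nat)
  : seq Sigma -> Prop := fun w => L (lastn a n w).

(* deterministic, possibly infinite-state automaton with an injective
   encoding of its states into bit strings *)
Record EncDFA (Sigma : Type) := {
  dstate : Type;
  dinit : dstate;
  ddelta : dstate -> Sigma -> dstate;
  dfinal : dstate -> Prop;
  denc : dstate -> seq bool;
  denc_inj : injective denc }.

Definition daccepts (Sigma : Type) (A : EncDFA Sigma) (w : seq Sigma) : Prop :=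
  @dfinal _ A (foldl (@ddelta _ A) (@dinit _ A) w).

Definition sw_algorithm (Sigma : Type) (a : Sigma) (L : seq Sigma -> Prop)
  (A : nat -> EncDFA Sigma) : Prop :=
  forall n w, daccepts (A n) w <-> Ln a L n w.

Definition space_le (Sigma : Type) (A : EncDFA Sigma) (c : nat) : Prop :=
  forall q : dstate A, size (@denc _ A q) <= c.

Definition in_F_O1 (Sigma : Type) (a : Sigma) (L : seq Sigma -> Prop) : Prop :=
  exists A : nat -> EncDFA Sigma, sw_algorithm a L A /\
    exists c n0 : nat, forall n, n0 <= n -> space_le (A n) c.

Definition suffix_testable (Sigma : Type) (k : nat) (K : seq Sigma -> Prop) : Prop :=
  forall x y z : seq Sigma, size z = k -> (K (x ++ z) <-> K (y ++ z)).

(* Main.v *)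
Require Import Defs.
From mathcomp Require Import all_boot.
From mathcomp Require Import zify.

Lemma lastnE (S : Type) (a : S) n w : lastn a n w = drop (size w) (nseq n a ++ w).
Proof.
rewrite /lastn drop_cat size_nseq.
case: ifP => H1; case: ifP => H2 //; try lia.
by rewrite drop_nseq.
Qed.

Lemma lastn_pad (S : Type) (a : S) n j w : lastn a n (nseq j a ++ w) = lastn a n w.
Proof.
rewrite !lastnE catA -nseqD (addnC n j) nseqD -catA size_cat size_nseq.
by rewrite (addnC j) -drop_drop drop_size_cat ?size_nseq.
Qed.

Lemma lastn_cat (S : Type) (a : S) n s t : n <= size t -> lastn a n (s ++ t) = lastn a n t.
Proof.
move=> H; rewrite !lastnE size_cat !drop_cat ?size_nseq ?size_cat ?size_nseq.
repeat case: ifP => ?; try lia.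
congr drop; lia.
Qed.

Lemma enc_inj (T : finType) : injective (fun q : T => nseq (enum_rank q) true).
Proof.
move=> p q /(congr1 size); rewrite !size_nseq => /val_inj; exact: enum_rank_inj.
Qed.

Definition mkDFA (S : Type) (T : finType) (i : T) (d : T -> S -> T) (f : T -> Prop)
  : EncDFA S :=
  {| dstate := T; dinit := i; ddelta := d; dfinal := f;
     denc := fun q => nseq (enum_rank q) true; denc_inj := @enc_inj T |}.

Definition shift (S : Type) k (q : k.-tuple S) (x : S) : k.-tuple S.
Proof.
refine (@Tuple k S (behead (rcons q x)) _).
by rewrite size_behead size_rcons size_tuple.
Defined.

Lemma run_shift (S : Type) k w (q : k.-tuple S) :
  val (foldl (@shift S k) q w) = drop (size w) (val q ++ w).
Proof.
elim: w q => [|x w IH] q /=; first by rewrite drop0 cats0.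
rewrite IH /= -cat_rcons -[drop (size w).+1 _]/(drop (1 + size w) _).
rewrite addnC -drop_drop drop1.
by case: (val q).
Qed.

Definition bitsle (c : nat) : seq (seq bool) :=
  flatten [seq map (@tval m bool) (enum {: m.-tuple bool}) | m <- iota 0 c.+1].

Lemma mem_bitsle c s : size s <= c -> s \in bitsle c.
Proof.
move=> H; apply/flatten_mapP; exists (size s).
  by rewrite mem_iota add0n ltnS H.
have -> : s = tval (in_tuple s) by [].
by apply: map_f; rewrite mem_enum.
Qed.

Lemma pump (S T : Type) (d : T -> S -> T) q v :
  foldl d q v = q -> forall r s, foldl d q (iter r (cat v) [::] ++ s) = foldl d q s.
Proof.
move=> Hq; elim=> [|r IH] s //=.
by rewrite -catA foldl_cat Hq IH.
Qed.

Lemma size_pump (S : Type) (v : seq S) r : size (iter r (cat v) [::]) = r * size v.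
Proof. by elim: r => //= r IH; rewrite size_cat IH mulSn. Qed.

Theorem corollary6p4 (Sigma : finType) (a : Sigma) (L : seq Sigma -> Prop) :
  in_F_O1 a L <-> exists k : nat, forall n : nat, suffix_testable k (Ln a L n).
Proof.
split.
- move=> [A [HA [c [n0 Hc]]]].
  set S2 := [seq (p, q) | p <- bitsle c, q <- bitsle c].
  exists (maxn n0 (size S2)) => n x y z Hz.
  case: (ltnP n n0) => Hn.
    by rewrite /Ln !lastn_cat //; lia.
  set B := A n.
  set run := fun w => foldl (@ddelta _ B) (@dinit _ B) w.
  have Hacc : forall w, Ln a L n w <-> @dfinal _ B (run w).
    by move=> w; rewrite -HA.
  set P := [seq (@denc _ B (run (x ++ take i z)), @denc _ B (run (y ++ take i z)))
           | i <- iota 0 (size z).+1].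
  have : ~~ uniq P.
    apply/negP => U.
    have := uniq_leq_size U.
    have Hsub : {subset P <= S2}.
      move=> p /mapP [i _ ->]; apply: allpairs_f; apply: mem_bitsle; exact: Hc.
    move/(_ S2 Hsub); by rewrite size_map size_iota Hz ltnNge leq_maxr.
  move/(uniqPn ([::], [::])) => [i [j [Hij Hj Heq]]].
  rewrite size_map size_iota in Hj.
  rewrite !(nth_map 0) ?size_iota // in Heq; last by lia.
  rewrite !nth_iota // in Heq; last by lia.
  case: Heq => /(@denc_inj _ B) Ex /(@denc_inj _ B) Ey; rewrite !add0n in Ex Ey.
  set u := take i z; set v := drop i (take j z); set w := drop j z.
  have Ez : take j z = u ++ v.
    by rewrite -{1}(cat_take_drop i (take j z)) take_takel //; lia.
  have Hvs : size v = j - i.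
    rewrite size_drop size_take; case: ifP => Hl; first done. move/negbT: Hl; rewrite -leqNgt => Hl. have -> : j = size z by apply/eqP; rewrite eqn_leq Hl -ltnS Hj. done.
  set vr := iter n (cat v) [::].
  have key : forall x', run (x' ++ take i z) = run (x' ++ take j z) ->
      run (x' ++ z) = run (x' ++ u ++ vr ++ w).
    move=> x' E.
    transitivity (foldl (@ddelta _ B) (run (x' ++ u)) w).
      by rewrite -{1}(cat_take_drop j z) catA /run foldl_cat -/(run _) -E.
    rewrite [RHS]/run catA foldl_cat -/(run _) pump //.
    by rewrite /run -foldl_cat -catA -Ez -/(run _) -E.
  have Hsz : n <= size (vr ++ w).
    rewrite size_cat size_pump Hvs; nia.
  have Kx := key x Ex; have Ky := key y Ey.
  apply: (iff_trans (Hacc _)); rewrite Kx -Hacc.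
  apply: iff_sym; apply: (iff_trans (Hacc _)); rewrite Ky -Hacc.
  by rewrite /Ln (catA x) (catA y) (@lastn_cat _ a n (x ++ u) _ Hsz) (@lastn_cat _ a n (y ++ u) _ Hsz).
- move=> [k Hk].
  exists (fun n => @mkDFA Sigma _ (nseq_tuple k a) (@shift Sigma k) (fun q => Ln a L n q)).
  split.
  + move=> n w; rewrite /daccepts /= run_shift /=.
    set s := nseq k a ++ w.
    have -> : Ln a L n w <-> Ln a L n s by rewrite /Ln /s lastn_pad.
    rewrite -{2}(cat_take_drop (size w) s).
    apply: iff_sym; apply: (Hk n _ [::]).
    by rewrite size_drop /s size_cat size_nseq addnK.
  + exists #|{: k.-tuple Sigma}|, 0 => n _ q /=.
    by rewrite size_nseq ltnW // ltn_ord.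
Qed.
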